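(* Let $G$ be a simple connected bipartite graph on $n$ vertices with maximum degree $\Delta$, and let $S=\sum_{j=1}^{n}D_j$. Suppose that $\deg(v_1)=\deg(v_2)=\cdots=\deg(v_k)=\Delta\le n-2$ for some $k$ with $1\le k\le n$. Then $$S_{\mathcal{D}}(G)\ \ge\ \max_{1\le i\le k}\frac{\sqrt{a_i^{2}+4b_i(1+\Delta)(n-\Delta-1)}}{(1+\Delta)(n-\Delta-1)},$$ where $a_i=(\Delta+1)(S-2D_i-2t_{v_i}\Delta)+2n\Delta^{2}$ and $b_i=D_i^{2}-2S\Delta^{2}+2D_it_{v_i}\Delta+t_{v_i}^{2}\Delta^{2}$.
   Context: $G$ has vertex set $\{v_1,\dots,v_n\}$; $d_G(u,v)$ denotes the distance in $G$. The distance matrix is $\mathcal{D}(G)=(d_G(v_i,v_j))_{n\times n}$. The transmission (distance degree) of $v_i$ is $D_i=\sum_{j\ne i}d_G(v_i,v_j)$, the $i$-th row sum of $\mathcal{D}(G)$. For a vertex $v$ of degree $d_v$, $t_v=\frac{1}{d_v}\sum_{v_j\sim v}D_j$ is the average distance degree of the neighbours of $v$. Let $\rho^{\mathcal{D}}(G)$ and $\rho^{\mathcal{D}}_{min}(G)$ be the largest and least eigenvalues of $\mathcal{D}(G)$; the distance spread is $S_{\mathcal{D}}(G)=\rho^{\mathcal{D}}(G)-\rho^{\mathcal{D}}_{min}(G)$. *)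

(* Defs.v *)
From HB Require Import structures.
From mathcomp Require Import all_boot all_order all_algebra.
Set Implicit Arguments. Unset Strict Implicit. Unset Printing Implicit Defensive.
Import Order.TTheory GRing.Theory Num.Theory.

(* Simple graphs on the vertex set 'I_n (vertex v_{i+1} is the ordinal i),
   given by an adjacency relation e. *)

Definition simple_graph n (e : rel 'I_n) : Prop :=
  (forall x y, e x y = e y x) /\ (forall x, ~~ e x x).

Definition connected_graph n (e : rel 'I_n) : Prop :=
  forall x y, connect e x y.

Definition bipartite_graph n (e : rel 'I_n) : Prop :=
  exists f : 'I_n -> bool, forall x y, e x y -> f x != f y.

Definition deg n (e : rel 'I_n) (x : 'I_n) : nat := #|[set y | e x y]|.

Definition max_deg n (e : rel 'I_n) : nat := \max_(x : 'I_n) deg e x.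

Fixpoint ball n (e : rel 'I_n) (k : nat) (u : 'I_n) : {set 'I_n} :=
  match k with
  | 0 => [set u]
  | k'.+1 => ball e k' u :|: [set y | [exists x in ball e k' u, e x y]]
  end.

(* graph distance d_G(u,v): the least k with v within k steps of u
   (for a connected graph on n vertices this k is < n) *)
Definition dist n (e : rel 'I_n) (u v : 'I_n) : nat :=
  find (fun k => v \in ball e k u) (iota 0 n).

Local Open Scope ring_scope.

Definition dist_mx (R : ringType) n (e : rel 'I_n) : 'M[R]_n :=
  \matrix_(i, j) (dist e i j)%:R.

Definition transmission (R : ringType) n (e : rel 'I_n) (i : 'I_n) : R :=
  \sum_(j < n | j != i) (dist e i j)%:R.

Definition avg_nbr_trans (R : fieldType) n (e : rel 'I_n) (v : 'I_n) : R :=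
  (deg e v)%:R^-1 * \sum_(j < n | e v j) transmission R e j.

Definition is_largest_eigenvalue (R : realFieldType) n (A : 'M[R]_n) (l : R) :=
  eigenvalue A l /\ (forall m, eigenvalue A m -> m <= l).

Definition is_least_eigenvalue (R : realFieldType) n (A : 'M[R]_n) (l : R) :=
  eigenvalue A l /\ (forall m, eigenvalue A m -> l <= m).

(* Main.v *)
Require Import Defs.
From HB Require Import structures.
From mathcomp Require Import all_boot all_order all_algebra.
From mathcomp Require Import complex ring lra zify.
Import Order.TTheory GRing.Theory Num.Theory.
Local Open Scope ring_scope.

Lemma spec_decomp (R : rcfType) n (A : 'M[R]_n) : A^T = A ->
  exists d : 'I_n -> R, (forall j, eigenvalue A (d j)) /\
  forall x : 'rV[R]_n, exists w : 'I_n -> R, (forall j, 0 <= w j) /\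
   (x *m A *m x^T) 0 0 = \sum_j d j * w j /\ (x *m x^T) 0 0 = \sum_j w j.
Proof.
move=> Asym.
pose toC := real_complex R.
pose A' := map_mx toC A.
have realC (r : R) : toC r \is Num.real by apply/complex_realP; exists r.
have A'sym : A' \is symmetricmx.
  apply/is_hermitianmxP; rewrite expr0 scale1r map_mx_id //.
  by rewrite /A' map_trmx Asym.
have A'real : A' \is a realmx by apply/mxOverP => i j; rewrite mxE.
have A'herm := realsym_hermsym A'sym A'real.
have /orthomx_spectralP Adec := hermitian_normalmx A'herm.
set P := spectralmx A' in Adec.
set sp := spectral_diag A' in Adec.
have Pu : P \is unitarymx := spectral_unitarymx A'.
have Punit : P \in unitmx := spectral_unit A'.
have /mxOverP spreal := hermitian_spectral_diag_real A'herm.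
have spR j : toC (@complex.Re R (sp 0 j)) = sp 0 j by rewrite /toC RRe_real.
exists (fun j => @complex.Re R (sp 0 j)); split.
  move=> j; suff H : eigenvalue A' (sp 0 j).
    by rewrite -(eigenvalue_map toC); rewrite -spR in H; exact: H.
  apply/eigenvalueP; exists (row j P).
    rewrite -/A' {1}Adec !mulmxA -row_mul mulmxV // -row_mul mul1mx row_diag_mx.
    by rewrite -scalemxAl -rowE.
  apply/negP => /eqP H; have := congr1 (mulmx^~ (invmx P)) H.
  rewrite -row_mul mulmxV // mul0mx row1 => /matrixP/(_ 0 j).
  by rewrite !mxE !eqxx /= => /eqP; rewrite oner_eq0.
move=> x.
pose x' := map_mx toC x.
pose w := x' *m invmx P.
have xT : x'^T = (x' ^t* )%sesqui.
  apply/matrixP => i j; rewrite !mxE conj_Creal //.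
have wT : (w ^t* )%sesqui = P *m (x' ^t* )%sesqui.
  rewrite /w trmx_mul map_mxM invmx_unitary // trmxCK //.
have mapE (M : 'M[R]_1) : toC (M 0 0) = (map_mx toC M) 0 0 by rewrite mxE.
have quad1 : toC ((x *m A *m x^T) 0 0) = (w *m diag_mx sp *m (w ^t* )%sesqui) 0 0.
  rewrite mapE.
  rewrite !map_mxM -map_trmx -/x' -/A' xT Adec wT.
  by rewrite /w !mulmxA.
have quad2 : toC ((x *m x^T) 0 0) = (w *m (w ^t* )%sesqui) 0 0.
  rewrite mapE.
  rewrite !map_mxM -map_trmx -/x' xT wT /w.
  by rewrite !mulmxA -(mulmxA x') mulVmx // mulmx1.
clearbody w.
pose wt k := @complex.Re R (w 0 k * (w 0 k)^*).
have wtR k : toC (wt k) = w 0 k * (w 0 k)^* by rewrite /toC RRe_real // ger0_real // mul_conjC_ge0.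
exists wt; split; first by move=> k; rewrite -ler0c -/toC wtR mul_conjC_ge0.
split; apply: (@complexI R); rewrite -/toC ?quad1 ?quad2 !mxE /toC rmorph_sum -/toC.
  apply: eq_bigr => k _; rewrite /toC rmorphM /= -/toC spR wtR mul_mx_diag !mxE.
  by rewrite mulrCA mulrA.
by apply: eq_bigr => k _; rewrite !mxE; symmetry; exact: wtR.
Qed.

Lemma psd2 (R : realFieldType) (a1 a2 q : R) :
  (forall s t : R, 0 <= s^+2 * a1 + t^+2 * a2 - 2 * s * t * q) ->
  [/\ 0 <= a1, 0 <= a2 & q^+2 <= a1 * a2].
Proof.
move=> H.
have h1 : 0 <= a1 by have := H 1 0; rewrite expr1n expr0n /=; lra.
have h2 : 0 <= a2 by have := H 0 1; rewrite expr1n expr0n /=; lra.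
split => //.
have [a20|a2pos] := eqVneq a2 0.
  have := H q (a1 + 1); rewrite a20.
  have hq : 0 <= q^+2 by apply: sqr_ge0.
  nra.
have a2p : 0 < a2 by rewrite lt_neqAle eq_sym a2pos h2.
have e : a2 * (a1 * a2 - q^+2) = a2^+2 * a1 + q^+2 * a2 - 2 * a2 * q * q by ring.
have := H a2 q; rewrite -e => h; rewrite -subr_ge0; by rewrite (pmulr_rge0 _ a2p) in h.
Qed.

Lemma sqrt_le_of (R : rcfType) (d Y : R) : 0 <= Y -> d <= Y^+2 -> Num.sqrt d <= Y.
Proof.
move=> hY hd; apply: (le_trans (ler_wsqrtr hd)).
by rewrite sqrtr_sqr ger0_norm.
Qed.

Lemma spread2 (R : rcfType) (c1 c2 P Q Rr rho m : R) :
  0 < c1 -> 0 < c2 ->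
  (forall s t, s^+2 * P + 2 * s * t * Q + t^+2 * Rr <= rho * (s^+2 * c1 + t^+2 * c2)) ->
  (forall s t, m * (s^+2 * c1 + t^+2 * c2) <= s^+2 * P + 2 * s * t * Q + t^+2 * Rr) ->
  Num.sqrt ((P * c2 - Rr * c1)^+2 + 4 * c1 * c2 * Q^+2) / (c1 * c2) <= rho - m.
Proof.
move=> c1p c2p H1 H2.
have [a1 a2 aq] : [/\ 0 <= rho * c1 - P, 0 <= rho * c2 - Rr
   & Q^+2 <= (rho * c1 - P) * (rho * c2 - Rr)].
  apply: psd2 => s t; have := H1 s t; lra.
have [b1 b2 bq] : [/\ 0 <= P - m * c1, 0 <= Rr - m * c2
   & (-Q)^+2 <= (P - m * c1) * (Rr - m * c2)].
  apply: psd2 => s t; have := H2 s t; lra.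
rewrite sqrrN in bq.
set d := _ + _.
have cp : 0 < c1 * c2 by apply: mulr_gt0.
have hY : Num.sqrt d <= c2 * (rho * c1 - P) + c1 * (rho * c2 - Rr).
  apply: sqrt_le_of; first by apply: addr_ge0; apply: mulr_ge0 => //; apply: ltW.
  rewrite /d.
  have e : (c2 * (rho * c1 - P) + c1 * (rho * c2 - Rr))^+2 - ((P * c2 - Rr * c1)^+2 + 4 * c1 * c2 * Q^+2)
     = 4 * (c1 * c2) * ((rho * c1 - P) * (rho * c2 - Rr) - Q^+2) by ring.
  rewrite -subr_ge0 e; apply: mulr_ge0; first by apply: mulr_ge0 => //; apply: ltW.
  by rewrite subr_ge0.
have hZ : Num.sqrt d <= c2 * (P - m * c1) + c1 * (Rr - m * c2).
  apply: sqrt_le_of; first by apply: addr_ge0; apply: mulr_ge0 => //; apply: ltW.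
  rewrite /d.
  have e : (c2 * (P - m * c1) + c1 * (Rr - m * c2))^+2 - ((P * c2 - Rr * c1)^+2 + 4 * c1 * c2 * Q^+2)
     = 4 * (c1 * c2) * ((P - m * c1) * (Rr - m * c2) - Q^+2) by ring.
  rewrite -subr_ge0 e; apply: mulr_ge0; first by apply: mulr_ge0 => //; apply: ltW.
  by rewrite subr_ge0.
rewrite ler_pdivrMr //.
have : 2 * Num.sqrt d <= 2 * ((rho - m) * (c1 * c2)).
  have -> : 2 * ((rho - m) * (c1 * c2)) = (c2 * (rho * c1 - P) + c1 * (rho * c2 - Rr)) + (c2 * (P - m * c1) + c1 * (Rr - m * c2)) by ring.
  lra.
lra.
Qed.

Lemma quad_form (R : comNzRingType) n (D : 'M[R]_n) (N : {set 'I_n}) (s t : R) :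
  D^T = D ->
  let z := \row_i (if i \in N then s else t) in
  let SS := \sum_i \sum_j D i j in
  let RN := \sum_(i in N) \sum_j D i j in
  let PP := \sum_(i in N) \sum_(j in N) D i j in
  (z *m D *m z^T) 0 0 = s^+2 * PP + 2 * s * t * (RN - PP) + t^+2 * (SS - 2 * RN + PP)
  /\ (z *m z^T) 0 0 = s^+2 * (#|N|)%:R + t^+2 * (n - #|N|)%:R.
Proof.
move=> Dsym z SS RN PP.
pose u := s - t.
pose c i : R := (i \in N)%:R.
have zE i : z 0 i = t + u * c i.
  by rewrite mxE /c /u; case: (i \in N); rewrite ?mulr1 ?mulr0; ring.
clearbody z.
have cE (F : 'I_n -> R) : \sum_i c i * F i = \sum_(i in N) F i.
  rewrite [RHS]big_mkcond; apply: eq_bigr => i _; rewrite /c.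
  by case: (i \in N); rewrite ?mul1r ?mul0r.
have Dji i j : D j i = D i j by rewrite -{1}Dsym mxE.
split.
  have -> : (z *m D *m z^T) 0 0 = \sum_i \sum_j
     (t^+2 * D i j + t * u * (c i * D i j) + t * u * (c j * D i j) + u^+2 * (c i * (c j * D i j))).
    rewrite mxE; under eq_bigr => j _ do rewrite [(z *m D) 0 j]mxE big_distrl /=.
    rewrite exchange_big /=; apply: eq_bigr => i _; apply: eq_bigr => j _.
    rewrite !mxE !zE; ring.
  have h1 : \sum_i \sum_j t^+2 * D i j = t^+2 * SS.
    by rewrite mulr_sumr; apply: eq_bigr => i _; rewrite mulr_sumr.
  have h2 : \sum_i \sum_j t * u * (c i * D i j) = t * u * RN.
    rewrite /RN -cE mulr_sumr; apply: eq_bigr => i _; by rewrite !mulr_sumr.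
  have h3 : \sum_i \sum_j t * u * (c j * D i j) = t * u * RN.
    rewrite exchange_big /RN -cE mulr_sumr; apply: eq_bigr => j _.
    rewrite !mulr_sumr; apply: eq_bigr => i _; by rewrite Dji.
  have h4 : \sum_i \sum_j u^+2 * (c i * (c j * D i j)) = u^+2 * PP.
    rewrite /PP -cE mulr_sumr; apply: eq_bigr => i _; by rewrite -cE !mulr_sumr.
  under eq_bigr do rewrite !big_split /=.
  rewrite !big_split /= h1 h2 h3 h4 /u; ring.
rewrite mxE.
have -> : \sum_j z 0 j * z^T j 0 = \sum_j (t^+2 + (s^+2 - t^+2) * c j).
  apply: eq_bigr => j _; rewrite !mxE !zE /c /u; case: (j \in N); rewrite /= ?mulr1 ?mulr0; ring.
have cs : \sum_i c i = (#|N|)%:R.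
  rewrite -sumr_const -cE; apply: eq_bigr => i _; by rewrite mulr1.
have Nn : (#|N| <= n)%N by rewrite -[X in (_ <= X)%N]card_ord max_card.
rewrite big_split /= sumr_const card_ord -mulr_sumr cs natrB // -mulr_natr; ring.
Qed.

Section Graph.
Variables (n : nat) (e : rel 'I_n).
Hypothesis esym : forall x y, e x y = e y x.
Hypothesis eirr : forall x, ~~ e x x.

Lemma ballP k u v : reflect (exists p, [/\ path e u p, last u p = v & (size p <= k)%N])
  (v \in ball e k u).
Proof.
elim: k v => [|k IH] v /=.
  rewrite in_set1; apply: (iffP eqP) => [->|[[|y p] [_ <- //]]].
  by exists [::].
rewrite in_setU in_set; apply: (iffP orP).
  case=> [/IH [p [pp lp sp]]|/existsP [x /andP [/IH [p [pp lp sp]] exv]]].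
    by exists p; split => //; apply: leqW.
  exists (rcons p v); rewrite rcons_path last_rcons size_rcons pp lp exv.
  by split.
move=> [p [pp lp sp]].
case: (leqP (size p) k) => hk; first by left; apply/IH; exists p.
have sz : size p = k.+1 by apply/eqP; rewrite eqn_leq sp hk.
case/lastP: p pp lp sp hk sz => [//|p y]; rewrite rcons_path last_rcons size_rcons.
move=> /andP [pp ey] <- _ _ [sz]; right; apply/existsP; exists (last u p).
by rewrite ey andbT; apply/IH; exists p; rewrite sz.
Qed.

Lemma ball_sym k u v : (v \in ball e k u) = (u \in ball e k v).
Proof.
suff H : forall u v, v \in ball e k u -> u \in ball e k v.
  by apply/idP/idP; apply: H.
move=> {}u {}v /ballP [p [pp lp sp]]; apply/ballP.
exists (rev (belast u p)); split.
    rewrite -lp rev_path; apply: (sub_path _ pp) => x y /=; by rewrite esym.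
  case: (p) pp sp lp => [|y q] _ _ /= => [->//|_]; by rewrite rev_cons last_rcons.
by rewrite size_rev size_belast.
Qed.

Lemma dist_sym u v : dist e u v = dist e v u.
Proof. by rewrite /dist; apply: eq_find => k; rewrite ball_sym. Qed.

Lemma find_iota (p : pred nat) m k : (k < m)%N -> p k -> (forall j, (j < k)%N -> ~~ p j) ->
  find p (iota 0 m) = k.
Proof.
move=> km pk hj.
have hp : has p (iota 0 m) by apply/hasP; exists k => //; rewrite mem_iota.
have fl : (find p (iota 0 m) < m)%N by rewrite -[X in (_ < X)%N](size_iota 0 m) -has_find.
have := nth_find 0 hp; rewrite nth_iota // add0n => pf.
case: (ltngtP (find p (iota 0 m)) k) => // h.
  by have := hj _ h; rewrite pf.
by have := before_find 0 h; rewrite nth_iota // add0n pk.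
Qed.

Lemma dist0 u : dist e u u = 0%N.
Proof.
apply: find_iota => //=; first by apply: leq_ltn_trans (ltn_ord u).
by rewrite in_set1.
Qed.

Lemma dist1 u v : (1 < n)%N -> e u v -> dist e u v = 1%N.
Proof.
move=> n1 uv; apply: find_iota => //=.
  rewrite in_setU in_set1 in_set; apply/orP; right; apply/existsP; exists u.
  by rewrite in_set1 eqxx.
case=> // _; rewrite /= in_set1; apply/negP => /eqP vu.
by move: uv; rewrite vu (negbTE (eirr u)).
Qed.

Lemma dist2 u w v : (2 < n)%N -> e v u -> e v w -> u != w -> ~~ e u w ->
  dist e u w = 2%N.
Proof.
move=> n2 vu vw uw nuw; apply: find_iota => //=.
  rewrite in_setU; apply/orP; right; rewrite in_set; apply/existsP; exists v.
  rewrite vw andbT /= in_setU in_set1; apply/orP; right; rewrite in_set.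
  by apply/existsP; exists u; rewrite in_set1 eqxx esym.
case=> [|[|//]] _ /=; first by rewrite in_set1 eq_sym.
rewrite in_setU in_set1 eq_sym negb_or uw /= in_set; apply/existsP => -[x].
by rewrite in_set1 => /andP [/eqP ->]; apply/negP.
Qed.

End Graph.

Lemma rayleigh (R : rcfType) n (A : 'M[R]_n) (rho m : R) : A^T = A ->
  (forall l, eigenvalue A l -> l <= rho) -> (forall l, eigenvalue A l -> m <= l) ->
  forall x : 'rV[R]_n, (x *m A *m x^T) 0 0 <= rho * (x *m x^T) 0 0 /\
                       m * (x *m x^T) 0 0 <= (x *m A *m x^T) 0 0.
Proof.
move=> Asym hmax hmin x.
have [d [deig dec]] := spec_decomp _ _ _ Asym.
have [w [w0 [-> ->]]] := dec x.
split; rewrite mulr_sumr; apply: ler_sum => j _.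
  by apply: ler_wpM2r => //; apply: hmax.
by apply: ler_wpM2r => //; apply: hmin.
Qed.

Lemma transE (R : rcfType) n (e : rel 'I_n) i :
  transmission R e i = \sum_j (dist e i j)%:R.
Proof. by rewrite /transmission [RHS](bigD1 i) //= dist0 add0r. Qed.

Lemma point_bound (R : rcfType) (n : nat) (e : rel 'I_n) (rho rho_min : R) (v : 'I_n)
  (Delta S a b : R) :
  simple_graph e -> bipartite_graph e ->
  deg e v = max_deg e ->
  (max_deg e <= n - 2)%N ->
  (forall l, eigenvalue (dist_mx R e) l -> l <= rho) ->
  (forall l, eigenvalue (dist_mx R e) l -> rho_min <= l) ->
  rho_min <= rho ->
  Delta = (max_deg e)%:R ->
  S = \sum_(j < n) transmission R e j ->
  a = (Delta + 1) * (S - 2 * transmission R e v - 2 * avg_nbr_trans R e v * Delta)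
    + 2 * n%:R * Delta ^+ 2 ->
  b = transmission R e v ^+ 2 - 2 * S * Delta ^+ 2
    + 2 * transmission R e v * avg_nbr_trans R e v * Delta
    + avg_nbr_trans R e v ^+ 2 * Delta ^+ 2 ->
  Num.sqrt (a ^+ 2 + 4 * b * (1 + Delta) * (n%:R - Delta - 1))
       / ((1 + Delta) * (n%:R - Delta - 1)) <= rho - rho_min.
Proof.
move=> [esym eirr] [f fb] degv hD rho_max min_min rmr -> -> -> ->.
set Dm := dist_mx R e.
have Dsym : Dm^T = Dm by apply/matrixP => i j; rewrite !mxE dist_sym.
have ray := @rayleigh R n Dm rho rho_min Dsym rho_max min_min.
have n0 : (0 < n)%N by apply: leq_ltn_trans (ltn_ord v).
case: (ltnP n 2) => n2.
  have n1 : n = 1%N by apply/eqP; rewrite eqn_leq n0 andbT -ltnS.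
  have n20 : (n - 2 = 0)%N by rewrite n1.
  have D0 : max_deg e = 0%N by apply/eqP; rewrite -leqn0 -n20.
  rewrite (_ : (1 + _) * (n%:R - _ - 1) = 0); first by rewrite invr0 mulr0 subr_ge0.
  by rewrite D0 n1 subr0 subrr mulr0.
set nb := [set y | e v y].
have vnb : v \notin nb by rewrite in_set (negbTE (eirr v)).
set N := v |: nb.
have cnb : #|nb| = max_deg e by rewrite -degv.
have cN : #|N| = (max_deg e).+1 by rewrite cardsU1 vnb cnb.
have Nlt : (#|N| < n)%N by rewrite cN; lia.
set dd : R := (max_deg e)%:R.
pose c1 : R := (#|N|)%:R.
pose c2 : R := (n - #|N|)%:R.
have c1p : 0 < c1 by rewrite /c1 ltr0n cN.
have c2p : 0 < c2 by rewrite /c2 ltr0n subn_gt0.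
have c1E : c1 = dd + 1 by rewrite /c1 cN -addn1 natrD.
have c2E : c2 = n%:R - dd - 1.
  by rewrite /c2 natrB ?(ltnW Nlt) // cN -addn1 natrD opprD addrA.
pose PP := \sum_(i in N) \sum_(j in N) Dm i j.
pose RN := \sum_(i in N) \sum_j Dm i j.
pose SS := \sum_i \sum_j Dm i j.
pose z s t := \row_i (if i \in N then s else t) : 'rV[R]_n.
have H1 : forall s t, s^+2 * PP + 2 * s * t * (RN - PP) + t^+2 * (SS - 2 * RN + PP)
    <= rho * (s^+2 * c1 + t^+2 * c2).
  move=> s t; have [q1 q2] := @quad_form R n Dm N s t Dsym.
  have [r1 _] := ray (z s t); rewrite /z q1 q2 in r1; exact: r1.
have H2 : forall s t, rho_min * (s^+2 * c1 + t^+2 * c2) <=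
    s^+2 * PP + 2 * s * t * (RN - PP) + t^+2 * (SS - 2 * RN + PP).
  move=> s t; have [q1 q2] := @quad_form R n Dm N s t Dsym.
  have [_ r2] := ray (z s t); rewrite /z q1 q2 in r2; exact: r2.
have sp := spread2 _ _ _ _ _ _ _ _ c1p c2p H1 H2.
have DmE i j : Dm i j = (dist e i j)%:R by rewrite mxE.
have SSE : SS = \sum_(j < n) transmission R e j.
  by apply: eq_bigr => i _; rewrite transE; apply: eq_bigr => j _; rewrite DmE.
have nbE (F : 'I_n -> R) : \sum_(j < n | e v j) F j = \sum_(j in nb) F j.
  by apply: eq_bigl => j; rewrite in_set.
have RNE : RN = transmission R e v + dd * avg_nbr_trans R e v.
  rewrite /RN big_setU1 //=.
  have tE i : \sum_j Dm i j = transmission R e i.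
    by rewrite transE; apply: eq_bigr => j _; rewrite DmE.
  rewrite tE; congr (_ + _).
  under eq_bigr do rewrite tE.
  rewrite /avg_nbr_trans degv -/dd nbE.
  have [dd0|ddn0] := eqVneq (max_deg e) 0%N.
    have : nb = set0 by apply/eqP; rewrite -cards_eq0 cnb dd0.
    by move=> nb0; rewrite nb0 !big_set0 !mulr0.
  by rewrite mulVKf // /dd pnatr_eq0.
have PPE : PP = 2 * dd ^+ 2.
  have n1 : (1 < n)%N by [].
  have d1 i : i \in nb -> dist e v i = 1%N by rewrite in_set => vi; apply: dist1.
  have rowv : \sum_(j in N) Dm v j = dd.
    rewrite big_setU1 //= DmE dist0 add0r.
    rewrite (eq_bigr (fun _ => 1)); last by move=> j jnb; rewrite DmE d1.
    by rewrite sumr_const cnb.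
  have rowi i : i \in nb -> \sum_(j in N) Dm i j = 2 * dd - 1.
    move=> inb; rewrite big_setU1 //= DmE dist_sym // d1 //.
    have : \sum_(j in nb) Dm i j + 2 = \sum_(j in nb) (2 : R).
      rewrite (bigD1 i) //= [RHS](bigD1 i) //= DmE dist0 add0r addrC.
      congr (_ + _); apply: eq_bigr => j /andP [jnb ji].
      have vi : e v i by rewrite in_set in inb.
      have vj : e v j by rewrite in_set in jnb.
      have n3 : (2 < n)%N.
        have : (2 <= #|nb|)%N.
          have -> : 2%N = #|[set i; j]| by rewrite cards2 eq_sym ji.
          apply: subset_leq_card; apply/subsetP => x; rewrite !inE.
          by case/orP => /eqP ->.
        rewrite cnb => h; lia.
      rewrite DmE (@dist2 n e esym i j v n3 vi vj) ?(eq_sym i j) //.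
      apply/negP => eij; move: (fb v i vi) (fb v j vj) (fb i j eij).
      by case: (f v); case: (f i); case: (f j).
    rewrite sumr_const cnb => h.
    have -> : \sum_(j in nb) Dm i j = 2 *+ max_deg e - 2 by rewrite -h addrK.
    rewrite -/dd -mulr_natr -/dd; ring.
  rewrite /PP big_setU1 //= rowv (eq_bigr (fun _ => 2 * dd - 1)); last by [].
  rewrite sumr_const cnb -mulr_natr -/dd; ring.
apply: le_trans sp; rewrite le_eqVlt; apply/orP; left; apply/eqP.
rewrite PPE RNE SSE c1E c2E.
congr (Num.sqrt _ / _); ring.
Qed.

Theorem theorem3p2 (R : rcfType) (n : nat) (e : rel 'I_n) (K : {set 'I_n})
  (rho rho_min : R) :
  simple_graph e -> connected_graph e -> bipartite_graph e ->
  K != set0 ->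
  (forall v, v \in K -> deg e v = max_deg e) ->
  (max_deg e <= n - 2)%N ->
  is_largest_eigenvalue (dist_mx R e) rho ->
  is_least_eigenvalue (dist_mx R e) rho_min ->
  let Delta : R := (max_deg e)%:R in
  let S : R := \sum_(j < n) transmission R e j in
  let a (i : 'I_n) : R :=
    (Delta + 1) * (S - 2 * transmission R e i - 2 * avg_nbr_trans R e i * Delta)
    + 2 * n%:R * Delta ^+ 2 in
  let b (i : 'I_n) : R :=
    transmission R e i ^+ 2 - 2 * S * Delta ^+ 2
    + 2 * transmission R e i * avg_nbr_trans R e i * Delta
    + avg_nbr_trans R e i ^+ 2 * Delta ^+ 2 in
  \big[Num.max/0]_(i in K)
     (Num.sqrt (a i ^+ 2 + 4 * b i * (1 + Delta) * (n%:R - Delta - 1))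
       / ((1 + Delta) * (n%:R - Delta - 1)))
  <= rho - rho_min.
Proof.
move=> Hs _ Hb _ Kdeg hD [rho_eig rho_max] [min_eig min_min].
have rmr : rho_min <= rho by apply: min_min.
cbv zeta.
elim/big_ind: _ => //; first by rewrite subr_ge0.
  by move=> x y hx hy; rewrite ge_max hx hy.
move=> v vK.
exact: (@point_bound R n e rho rho_min v _ _ _ _ Hs Hb (Kdeg v vK) hD rho_max min_min rmr (erefl _) (erefl _) (erefl _) (erefl _)).
Qed.
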